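(* Let $a,b,c\in[0,1]$, each different from $\frac12$, and define $f=f_{a,b,c}:[0,1]\to[0,1]$ by $$f(x)=\begin{cases}(1-2a)x^2+2ax, & x\in[0,\frac13],\\ (1-2b)x^2+2bx, & x\in(\frac13,\frac23),\\ (1-2c)x^2+2cx, & x\in[\frac23,1].\end{cases}$$ Let $f^n$ denote the $n$-fold composition and $x^{(n)}=f^n(x^{(0)})$. Then: 1. The set of fixed points of $f$ is $\{0,1\}$. 2. If $a,b,c<\frac12$, then $\lim_{n\to\infty}x^{(n)}=0$ for all $x^{(0)}\in[0,1)$. 3. If $a<\frac12$, $b<\frac12$, $c>\frac12$, then $\lim_{n\to\infty}x^{(n)}=0$ if $x^{(0)}\in[0,\frac23)$ and $\lim_{n\to\infty}x^{(n)}=1$ if $x^{(0)}\in[\frac23,1]$. 4. If $a<\frac12$, $b>\frac12$, $c<\frac12$, then $\lim_{n\to\infty}x^{(n)}=0$ for all $x^{(0)}\in[0,\frac13]$. 5. If $a<\frac12$, $b>\frac12$, $c<\frac12$, let $A_1=[0,\frac13]$, $A_2=(\frac13,\frac49(1+c))\cup(\frac49(1+b),1)$, $A_3=[\frac49(1+c),\frac49(1+b)]$. Then (i) $\lim_{n\to\infty}x^{(n)}=0$ for every $x^{(0)}\in A_1$; (ii) for every $x_0\in A_2$ there exists $n_0=n_0(x_0)\in\mathbb N$ such that $f^n(x_0)\in A_3$ for all $n>n_0$; (iii) $f(A_3)\subset A_3$. 6. If $a<\frac12$, $b>\frac12$, $c>\frac12$, then $\lim_{n\to\infty}x^{(n)}=0$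 if $x^{(0)}\in[0,\frac13]$ and $\lim_{n\to\infty}x^{(n)}=1$ if $x^{(0)}\in(\frac13,1]$. 7. If $a>\frac12$, $b<\frac12$, $c<\frac12$, let $B_1=(0,\frac19(1+4b))\cup(\frac19(1+4a),1)$ and $B_2=[\frac19(1+4b),\frac19(1+4a)]$. Then (i) for every $x_0\in B_1$ there exists $n_0=n_0(x_0)\in\mathbb N$ such that $f^n(x_0)\in B_2$ for all $n>n_0$; (ii) $f(B_2)\subset B_2$. 8. If $a>\frac12$, $b<\frac12$, $c>\frac12$, let $C_1=(0,\frac19(1+4b))\cup(\frac19(1+4a),\frac23)$, $C_2=[\frac19(1+4b),\frac19(1+4a)]$, $C_3=[\frac23,1]$. Then (i) for every $x_0\in C_1$ there exists $n_0=n_0(x_0)\in\mathbb N$ such that $f^n(x_0)\in C_2$ for all $n>n_0$; (ii) $f(C_2)\subset C_2$; (iii) $\lim_{n\to\infty}x^{(n)}=1$ for every $x^{(0)}\in C_3$. 9. If $a,b,c>\frac12$, then $\lim_{n\to\infty}x^{(n)}=1$ for all $x^{(0)}\in(0,1]$.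
   Context: Here all parameters lie in $[0,1]$, so e.g. ''$a<\frac12$'' means $0\le a<\frac12$ and ''$a>\frac12$'' means $\frac12<a\le1$. The map is the reduction to $[0,1]$ (via $y=1-x$) of the quadratic stochastic operator $x'=x^2+2p(x)xy$, $y'=2(1-p(x))xy+y^2$ with $p(x)=a$ for $x\le\frac13$, $b$ for $\frac13<x<\frac23$, $c$ for $x\ge\frac23$. *)

(* Defs.v *)
From Stdlib Require Import Reals Lra.
Open Scope R_scope.

Definition pval (a b c x : R) : R :=
  if Rle_dec x (1/3) then a else if Rlt_dec x (2/3) then b else c.

Definition fabc (a b c x : R) : R :=
  (1 - 2 * pval a b c x) * x ^ 2 + 2 * pval a b c x * x.

Fixpoint fiter (a b c : R) (n : nat) (x : R) : R :=
  match n with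
  | O => x
  | S m => fabc a b c (fiter a b c m x)
  end.

(* Main.v *)
Require Import Defs.
From Stdlib Require Import Reals Lra Lia Psatz.
Open Scope R_scope.

Definition F (p x : R) := (1 - 2*p)*x^2 + 2*p*x.

Lemma fabcF a b c x : fabc a b c x = F (pval a b c x) x.
Proof. reflexivity. Qed.

Lemma F_diff p x : F p x = x + (2*p-1)*x*(1-x).
Proof. unfold F; ring. Qed.

Lemma F_range p x : 0<=p<=1 -> 0<=x<=1 -> 0 <= F p x <= 1.
Proof.
  intros Hp Hx. unfold F.
  assert (0 <= x*(1-x)) by nra.
  assert (0 <= p * (x*(1-x))) by nra.
  assert (0 <= (1-p) * (x*(1-x))) by nra.
  split; nra.
Qed.

Lemma F_ge_sq p x : 0<=p -> 0<=x<=1 -> x^2 <= F p x.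
Proof. intros. assert (0 <= p*(x*(1-x))) by (apply Rmult_le_pos; nra).
  assert (F p x - x^2 = 2*(p*(x*(1-x)))) by (unfold F; ring). lra. Qed.

Lemma Fmono p x y : 0<=p<=1 -> 0<=x -> x<=y -> y<=1 -> F p x <= F p y.
Proof.
  intros Hp Hx Hxy Hy.
  assert (E: F p y - F p x = (y-x)*((1-2*p)*(x+y)+2*p)) by (unfold F; ring).
  assert (0 <= (1-2*p)*(x+y)+2*p).
  { destruct (Rle_dec 0 (1-x-y)).
    - assert (0 <= p*(1-x-y)) by nra. nra.
    - assert (p*(1-x-y) >= 1*(1-x-y)) by nra. nra. }
  assert (0 <= (y-x)*((1-2*p)*(x+y)+2*p)) by nra. lra.
Qed.

Lemma pval_lo a b c x : x <= 1/3 -> pval a b c x = a.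
Proof. intros; unfold pval; destruct Rle_dec; [reflexivity|lra]. Qed.
Lemma pval_mid a b c x : 1/3 < x < 2/3 -> pval a b c x = b.
Proof. intros; unfold pval; destruct Rle_dec; [lra|]; destruct Rlt_dec; [reflexivity|lra]. Qed.
Lemma pval_hi a b c x : 2/3 <= x -> pval a b c x = c.
Proof. intros; unfold pval; destruct Rle_dec; [lra|]; destruct Rlt_dec; [lra|reflexivity]. Qed.
Lemma pval_cases a b c x : pval a b c x = a \/ pval a b c x = b \/ pval a b c x = c.
Proof. unfold pval; destruct Rle_dec; [|destruct Rlt_dec]; auto. Qed.
Lemma pval_ab a b c x : x < 2/3 -> pval a b c x = a \/ pval a b c x = b.
Proof. intros; unfold pval; destruct Rle_dec; [|destruct Rlt_dec]; auto; lra. Qed.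
Lemma pval_bc a b c x : 1/3 < x -> pval a b c x = b \/ pval a b c x = c.
Proof. intros; unfold pval; destruct Rle_dec; [lra|destruct Rlt_dec]; auto. Qed.
Lemma pval_range a b c x : 0<=a<=1 -> 0<=b<=1 -> 0<=c<=1 -> 0 <= pval a b c x <= 1.
Proof. intros; destruct (pval_cases a b c x) as [E|[E|E]]; rewrite E; auto. Qed.

Lemma step_dec p k x : 0<=x<=1 -> 2*p-1 <= -k -> F p x <= x - k*x*(1-x).
Proof. intros. rewrite F_diff. assert (0 <= x*(1-x)) by nra. nra. Qed.
Lemma step_inc p k x : 0<=x<=1 -> k <= 2*p-1 -> x + k*x*(1-x) <= F p x.
Proof. intros. rewrite F_diff. assert (0 <= x*(1-x)) by nra. nra. Qed.

Lemma min3 u v w : 0<u -> 0<v -> 0<w -> exists k, 0<k<=1 /\ k<=u /\ k<=v /\ k<=w.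
Proof.
  intros. exists (Rmin 1 (Rmin u (Rmin v w))). unfold Rmin.
  repeat destruct Rle_dec; lra.
Qed.

Lemma to0 a b c x0 k : 0 <= x0 < 1 -> 0 < k <= 1 ->
  (forall x, 0 <= x <= x0 -> 0 <= fabc a b c x <= x - k*x*(1-x)) ->
  Un_cv (fun n => fiter a b c n x0) 0.
Proof.
  intros Hx0 Hk H.
  set (q := 1 - k*(1-x0)).
  assert (Hq: 0 <= q < 1) by (unfold q; split; nra).
  assert (Hn: forall n, (0 <= fiter a b c n x0 <= x0) /\ fiter a b c n x0 <= q^n * x0).
  { induction n; simpl.
    - lra.
    - destruct IHn as [[H0 H1] H2]. specialize (H _ (conj H0 H1)).
      assert (fabc a b c (fiter a b c n x0) <= q * fiter a b c n x0).
      { unfold q. assert (k * fiter a b c n x0 * (1 - fiter a b c n x0) >= k*fiter a b c n x0*(1-x0)).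
        { assert (0 <= k * fiter a b c n x0) by nra. nra. } nra. }
      assert (q * fiter a b c n x0 <= q * (q^n*x0)) by nra.
      assert (0 <= k*fiter a b c n x0*(1-fiter a b c n x0)).
      { assert (0 <= k * fiter a b c n x0) by nra. nra. }
      lra. }
  intros eps Heps.
  destruct (pow_lt_1_zero q) with eps as [N HN]; auto.
  { rewrite Rabs_right; lra. }
  exists N. intros n Hn'. unfold R_dist. rewrite Rminus_0_r.
  destruct (Hn n) as [[H0 H1] H2].
  rewrite Rabs_right by lra. specialize (HN n Hn').
  assert (0 <= q^n) by (apply pow_le; lra).
  rewrite Rabs_right in HN by lra. nra.
Qed.

Lemma to1 a b c x0 k : 0 < x0 <= 1 -> 0 < k <= 1 ->
  (forall x, x0 <= x <= 1 -> x + k*x*(1-x) <= fabc a b c x <= 1) ->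
  Un_cv (fun n => fiter a b c n x0) 1.
Proof.
  intros Hx0 Hk H.
  set (q := 1 - k*x0).
  assert (Hq: 0 <= q < 1) by (unfold q; split; nra).
  assert (Hn: forall n, (x0 <= fiter a b c n x0 <= 1) /\ 1 - fiter a b c n x0 <= q^n * (1-x0)).
  { induction n; simpl.
    - lra.
    - destruct IHn as [[H0 H1] H2]. specialize (H _ (conj H0 H1)).
      set (u := fiter a b c n x0) in *.
      assert (k*u*(1-u) >= k*x0*(1-u)).
      { assert (0 <= k * (1-u)) by nra. nra. }
      assert (0 <= k*x0*(1-u)) by (assert (0 <= k*x0) by nra; nra).
      assert (1 - fabc a b c u <= q * (1-u)) by (unfold q; nra).
      assert (q * (1-u) <= q * (q^n*(1-x0))) by nra.
      lra. }
  intros eps Heps.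
  destruct (pow_lt_1_zero q) with eps as [N HN]; auto.
  { rewrite Rabs_right; lra. }
  exists N. intros n Hn'. unfold R_dist.
  destruct (Hn n) as [[H0 H1] H2].
  rewrite Rabs_left1 by lra. specialize (HN n Hn').
  assert (0 <= q^n) by (apply pow_le; lra).
  rewrite Rabs_right in HN by lra. nra.
Qed.

Lemma stay a b c l h m x0 :
  (forall x, l <= x <= h -> l <= fabc a b c x <= h) ->
  l <= fiter a b c m x0 <= h ->
  forall n, (n >= m)%nat -> l <= fiter a b c n x0 <= h.
Proof.
  intros Hinv Hm n Hn. induction n.
  - replace m with 0%nat in Hm by lia. exact Hm.
  - destruct (Nat.eq_dec (S n) m) as [E|E].
    + rewrite E; exact Hm.
    + simpl. apply Hinv. apply IHn. lia.
Qed.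

Lemma reach_up a b c l h e x0 : 0 < e -> x0 < l ->
  (forall x, x0 <= x < l -> x + e <= fabc a b c x <= h) ->
  (forall x, l <= x <= h -> l <= fabc a b c x <= h) ->
  exists n0 : nat, forall n, (n > n0)%nat -> l <= fiter a b c n x0 <= h.
Proof.
  intros He Hl Hs Hinv.
  assert (H: forall n, (exists m, (m <= n)%nat /\ l <= fiter a b c m x0 <= h)
                      \/ (x0 + INR n * e <= fiter a b c n x0 < l)).
  { induction n.
    - right. simpl. lra.
    - destruct IHn as [[m [Hm Hf]]|[H1 H2]].
      + left; exists m; split; [lia|auto].
      + assert (Hx: x0 <= fiter a b c n x0 < l).
        { assert (0 <= INR n * e) by (apply Rmult_le_pos; [apply pos_INR|lra]). lra. }
        specialize (Hs _ Hx). rewrite S_INR. simpl.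
        destruct (Rlt_dec (fabc a b c (fiter a b c n x0)) l).
        * right. lra.
        * left. exists (S n). split; [lia|]. simpl. lra. }
  destruct (INR_archimed e (l - x0)) as [N HN]; auto.
  destruct (H N) as [[m [Hm Hf]]|[H1 H2]]; [|lra].
  exists m. intros n Hn. apply (stay a b c l h m); auto. lia.
Qed.

Lemma reach_down a b c l h e x0 : 0 < e -> h < x0 ->
  (forall x, h < x <= x0 -> l <= fabc a b c x <= x - e) ->
  (forall x, l <= x <= h -> l <= fabc a b c x <= h) ->
  exists n0 : nat, forall n, (n > n0)%nat -> l <= fiter a b c n x0 <= h.
Proof.
  intros He Hl Hs Hinv.
  assert (H: forall n, (exists m, (m <= n)%nat /\ l <= fiter a b c m x0 <= h)
                      \/ (h < fiter a b c n x0 <= x0 - INR n * e)).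
  { induction n.
    - right. simpl. lra.
    - destruct IHn as [[m [Hm Hf]]|[H1 H2]].
      + left; exists m; split; [lia|auto].
      + assert (Hx: h < fiter a b c n x0 <= x0).
        { assert (0 <= INR n * e) by (apply Rmult_le_pos; [apply pos_INR|lra]). lra. }
        specialize (Hs _ Hx). rewrite S_INR. simpl.
        destruct (Rlt_dec h (fabc a b c (fiter a b c n x0))).
        * right. lra.
        * left. exists (S n). split; [lia|]. simpl. lra. }
  destruct (INR_archimed e (x0 - h)) as [N HN]; auto.
  destruct (H N) as [[m [Hm Hf]]|[H1 H2]]; [|lra].
  exists m. intros n Hn. apply (stay a b c l h m); auto. lia.
Qed.

Lemma x1x_mid x : 1/3 <= x <= 2/3 -> 2/9 <= x*(1-x).
Proof. intros. assert (0 <= (x-1/3)*(2/3-x)) by nra. nra. Qed.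

Lemma prod_lb x lo up : lo <= x -> x <= up -> 0 <= lo -> up <= 1 -> lo*(1-up) <= x*(1-x).
Proof. intros. assert (0 <= 1-up) by lra. nra. Qed.

Lemma inv5 a b c : 0<=b<=1 -> 0<=c<=1 -> 1/2 < b -> c < 1/2 ->
  forall x, 4/9*(1+c) <= x <= 4/9*(1+b) -> 4/9*(1+c) <= fabc a b c x <= 4/9*(1+b).
Proof.
  intros Hb Hc Hb2 Hc2 x Hx. rewrite fabcF.
  destruct (Rlt_dec x (2/3)).
  - rewrite pval_mid by lra.
    assert (F b (2/3) = 4/9*(1+b)) by (unfold F; field).
    assert (F b x <= F b (2/3)) by (apply Fmono; lra).
    assert (x <= F b x) by (pose proof (step_inc b 0 x); lra).
    lra.
  - rewrite pval_hi by lra.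
    assert (F c (2/3) = 4/9*(1+c)) by (unfold F; field).
    assert (F c (2/3) <= F c x) by (apply Fmono; lra).
    assert (F c x <= x) by (pose proof (step_dec c 0 x); lra).
    lra.
Qed.

Lemma inv7 a b c : 0<=a<=1 -> 0<=b<=1 -> 1/2 < a -> b < 1/2 ->
  forall x, 1/9*(1+4*b) <= x <= 1/9*(1+4*a) -> 1/9*(1+4*b) <= fabc a b c x <= 1/9*(1+4*a).
Proof.
  intros Ha Hb Ha2 Hb2 x Hx. rewrite fabcF.
  destruct (Rle_dec x (1/3)).
  - rewrite pval_lo by lra.
    assert (F a (1/3) = 1/9*(1+4*a)) by (unfold F; field).
    assert (F a x <= F a (1/3)) by (apply Fmono; lra).
    assert (x <= F a x) by (pose proof (step_inc a 0 x); lra).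
    lra.
  - rewrite pval_mid by lra.
    assert (F b (1/3) = 1/9*(1+4*b)) by (unfold F; field).
    assert (F b (1/3) <= F b x) by (apply Fmono; lra).
    assert (F b x <= x) by (pose proof (step_dec b 0 x); lra).
    lra.
Qed.

Lemma up7 a b c : 0<=a<=1 -> 0<=b<=1 -> 1/2 < a -> b < 1/2 ->
  forall x0, 0 < x0 < 1/9*(1+4*b) ->
  exists n0 : nat, forall n : nat, (n > n0)%nat ->
    1/9*(1+4*b) <= fiter a b c n x0 <= 1/9*(1+4*a).
Proof.
  intros Ha Hb Ha2 Hb2 x0 Hx0.
  apply (reach_up a b c _ _ ((2*a-1)*(x0*(2/3)))); [nra|lra| |apply inv7; auto].
  intros x Hx. rewrite fabcF, pval_lo by lra.
  assert (F a (1/3) = 1/9*(1+4*a)) by (unfold F; field).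
  assert (F a x <= F a (1/3)) by (apply Fmono; lra).
  assert (x0*(1-1/3) <= x*(1-x)) by (apply prod_lb; lra).
  pose proof (F_diff a x); pose proof (F_diff b x); pose proof (F_diff c x). split; [|lra].
  assert ((2*a-1)*(x0*(2/3)) <= (2*a-1)*(x*(1-x))) by (apply Rmult_le_compat_l; lra).
  lra.
Qed.

Theorem theorem2p8 (a b c : R)
  (ha : 0 <= a <= 1) (hb : 0 <= b <= 1) (hc : 0 <= c <= 1)
  (ha2 : a <> 1/2) (hb2 : b <> 1/2) (hc2 : c <> 1/2) :
  (* 1 *)
  (forall x, 0 <= x <= 1 -> (fabc a b c x = x <-> x = 0 \/ x = 1)) /\
  (* 2 *)
  (a < 1/2 -> b < 1/2 -> c < 1/2 ->
     forall x0, 0 <= x0 < 1 -> Un_cv (fun n => fiter a b c n x0) 0) /\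
  (* 3 *)
  (a < 1/2 -> b < 1/2 -> c > 1/2 ->
     (forall x0, 0 <= x0 < 2/3 -> Un_cv (fun n => fiter a b c n x0) 0) /\
     (forall x0, 2/3 <= x0 <= 1 -> Un_cv (fun n => fiter a b c n x0) 1)) /\
  (* 4 *)
  (a < 1/2 -> b > 1/2 -> c < 1/2 ->
     forall x0, 0 <= x0 <= 1/3 -> Un_cv (fun n => fiter a b c n x0) 0) /\
  (* 5 *)
  (a < 1/2 -> b > 1/2 -> c < 1/2 ->
     (forall x0, 0 <= x0 <= 1/3 -> Un_cv (fun n => fiter a b c n x0) 0) /\
     (forall x0, (1/3 < x0 < 4/9 * (1 + c)) \/ (4/9 * (1 + b) < x0 < 1) ->
        exists n0 : nat, forall n : nat, (n > n0)%nat ->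
          4/9 * (1 + c) <= fiter a b c n x0 <= 4/9 * (1 + b)) /\
     (forall x, 4/9 * (1 + c) <= x <= 4/9 * (1 + b) ->
          4/9 * (1 + c) <= fabc a b c x <= 4/9 * (1 + b))) /\
  (* 6 *)
  (a < 1/2 -> b > 1/2 -> c > 1/2 ->
     (forall x0, 0 <= x0 <= 1/3 -> Un_cv (fun n => fiter a b c n x0) 0) /\
     (forall x0, 1/3 < x0 <= 1 -> Un_cv (fun n => fiter a b c n x0) 1)) /\
  (* 7 *)
  (a > 1/2 -> b < 1/2 -> c < 1/2 ->
     (forall x0, (0 < x0 < 1/9 * (1 + 4 * b)) \/ (1/9 * (1 + 4 * a) < x0 < 1) ->
        exists n0 : nat, forall n : nat, (n > n0)%nat ->
          1/9 * (1 + 4 * b) <= fiter a b c n x0 <= 1/9 * (1 + 4 * a)) /\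
     (forall x, 1/9 * (1 + 4 * b) <= x <= 1/9 * (1 + 4 * a) ->
          1/9 * (1 + 4 * b) <= fabc a b c x <= 1/9 * (1 + 4 * a))) /\
  (* 8 *)
  (a > 1/2 -> b < 1/2 -> c > 1/2 ->
     (forall x0, (0 < x0 < 1/9 * (1 + 4 * b)) \/ (1/9 * (1 + 4 * a) < x0 < 2/3) ->
        exists n0 : nat, forall n : nat, (n > n0)%nat ->
          1/9 * (1 + 4 * b) <= fiter a b c n x0 <= 1/9 * (1 + 4 * a)) /\
     (forall x, 1/9 * (1 + 4 * b) <= x <= 1/9 * (1 + 4 * a) ->
          1/9 * (1 + 4 * b) <= fabc a b c x <= 1/9 * (1 + 4 * a)) /\
     (forall x0, 2/3 <= x0 <= 1 -> Un_cv (fun n => fiter a b c n x0) 1)) /\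
  (* 9 *)
  (a > 1/2 -> b > 1/2 -> c > 1/2 ->
     forall x0, 0 < x0 <= 1 -> Un_cv (fun n => fiter a b c n x0) 1).
Proof.
  pose proof (pval_range a b c) as PR.
  assert (to0a : a < 1/2 -> forall x0, 0 <= x0 <= 1/3 -> Un_cv (fun n => fiter a b c n x0) 0).
  { intros Ha x0 Hx0. apply (to0 a b c x0 (1-2*a)); [lra|lra|].
    intros x Hx. rewrite fabcF, pval_lo by lra. split.
    - apply F_range; lra.
    - apply step_dec; lra. }
  split; [|split; [|split; [|split; [|split; [|split; [|split; [|split]]]]]]].
  -
    intros x Hx. rewrite fabcF, F_diff.
    assert (Hp: 2*pval a b c x - 1 <> 0)
      by (destruct (pval_cases a b c x) as [E|[E|E]]; rewrite E; lra).
    split.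
    + intros E. assert (E2: (2*pval a b c x - 1) * (x*(1-x)) = 0) by lra.
      apply Rmult_integral in E2. destruct E2 as [E2|E2]; [lra|].
      apply Rmult_integral in E2. lra.
    + intros [E|E]; subst; ring.
  -
    intros Ha Hb Hc x0 Hx0.
    destruct (min3 (1-2*a) (1-2*b) (1-2*c)) as [k Hk]; try lra.
    apply (to0 a b c x0 k); [lra|lra|].
    intros x Hx. rewrite fabcF. split.
    + apply F_range; [apply PR|]; lra.
    + destruct (pval_cases a b c x) as [E|[E|E]]; rewrite E; apply step_dec; lra.
  -
    intros Ha Hb Hc. split.
    + intros x0 Hx0.
      destruct (min3 (1-2*a) (1-2*b) (1-2*b)) as [k Hk]; try lra.
      apply (to0 a b c x0 k); [lra|lra|].
      intros x Hx. rewrite fabcF. split.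
      * apply F_range; [apply PR|]; lra.
      * destruct (pval_ab a b c x) as [E|E]; try lra; rewrite E; apply step_dec; lra.
    + intros x0 Hx0.
      apply (to1 a b c x0 (2*c-1)); [lra|lra|].
      intros x Hx. rewrite fabcF, pval_hi by lra. split.
      * apply step_inc; lra.
      * apply F_range; lra.
  -
    intros Ha _ _. apply to0a; auto.
  -
    intros Ha Hb Hc. split; [apply to0a; auto|]. split; [|apply inv5; auto].
    intros x0 [Hx0|Hx0].
    + apply (reach_up a b c _ _ ((2*b-1)*(2/9))); [nra|lra| |apply inv5; auto].
      intros x Hx. rewrite fabcF, pval_mid by lra.
      assert (F b (2/3) = 4/9*(1+b)) by (unfold F; field).
      assert (F b x <= F b (2/3)) by (apply Fmono; lra).
      assert (2/9 <= x*(1-x)) by (apply x1x_mid; lra).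
      pose proof (F_diff a x); pose proof (F_diff b x); pose proof (F_diff c x). split; [|lra].
      assert ((2*b-1)*(2/9) <= (2*b-1)*(x*(1-x))) by (apply Rmult_le_compat_l; lra).
      lra.
    + apply (reach_down a b c _ _ ((1-2*c)*((2/3)*(1-x0)))); [nra|lra| |apply inv5; auto].
      intros x Hx. rewrite fabcF, pval_hi by lra.
      assert (F c (2/3) = 4/9*(1+c)) by (unfold F; field).
      assert (F c (2/3) <= F c x) by (apply Fmono; lra).
      assert ((2/3)*(1-x0) <= x*(1-x)) by (apply prod_lb; lra).
      pose proof (F_diff a x); pose proof (F_diff b x); pose proof (F_diff c x). split; [lra|].
      assert ((1-2*c)*((2/3)*(1-x0)) <= (1-2*c)*(x*(1-x))) by (apply Rmult_le_compat_l; lra).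
      lra.
  -
    intros Ha Hb Hc. split; [apply to0a; auto|].
    intros x0 Hx0.
    destruct (min3 (2*b-1) (2*c-1) (2*c-1)) as [k Hk]; try lra.
    apply (to1 a b c x0 k); [lra|lra|].
    intros x Hx. rewrite fabcF. split.
    + destruct (pval_bc a b c x) as [E|E]; try lra; rewrite E; apply step_inc; lra.
    + apply F_range; [apply PR|]; lra.
  -
    intros Ha Hb Hc. split; [|apply inv7; auto].
    intros x0 [Hx0|Hx0]; [apply up7; auto|].
    destruct (min3 (1-2*b) (1-2*c) (1-2*c)) as [k Hk]; try lra.
    apply (reach_down a b c _ _ (k*((1/3)*(1-x0)))); [nra|lra| |apply inv7; auto].
    intros x Hx.
    assert ((1/3)*(1-x0) <= x*(1-x)) by (apply prod_lb; lra).
    assert (k*((1/3)*(1-x0)) <= k*(x*(1-x))) by (apply Rmult_le_compat_l; lra).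
    rewrite fabcF. destruct (Rlt_dec x (2/3)).
    + rewrite pval_mid by lra.
      assert (F b (1/3) = 1/9*(1+4*b)) by (unfold F; field).
      assert (F b (1/3) <= F b x) by (apply Fmono; lra).
      pose proof (step_dec b k x). lra.
    + rewrite pval_hi by lra.
      assert (x^2 <= F c x) by (apply F_ge_sq; lra).
      assert (4/9 <= x^2) by nra.
      pose proof (step_dec c k x). lra.
  -
    intros Ha Hb Hc. split; [|split; [apply inv7; auto|]].
    + intros x0 [Hx0|Hx0]; [apply up7; auto|].
      apply (reach_down a b c _ _ ((1-2*b)*((1/3)*(1-x0)))); [nra|lra| |apply inv7; auto].
      intros x Hx.
      assert ((1/3)*(1-x0) <= x*(1-x)) by (apply prod_lb; lra).
      assert ((1-2*b)*((1/3)*(1-x0)) <= (1-2*b)*(x*(1-x))) by (apply Rmult_le_compat_l; lra).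
      rewrite fabcF, pval_mid by lra.
      assert (F b (1/3) = 1/9*(1+4*b)) by (unfold F; field).
      assert (F b (1/3) <= F b x) by (apply Fmono; lra).
      pose proof (step_dec b (1-2*b) x). lra.
    + intros x0 Hx0.
      apply (to1 a b c x0 (2*c-1)); [lra|lra|].
      intros x Hx. rewrite fabcF, pval_hi by lra. split.
      * apply step_inc; lra.
      * apply F_range; lra.
  -
    intros Ha Hb Hc x0 Hx0.
    destruct (min3 (2*a-1) (2*b-1) (2*c-1)) as [k Hk]; try lra.
    apply (to1 a b c x0 k); [lra|lra|].
    intros x Hx. rewrite fabcF. split.
    + destruct (pval_cases a b c x) as [E|[E|E]]; rewrite E; apply step_inc; lra.
    + apply F_range; [apply PR|]; lra.
Qed.
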